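(* Let $G$ be a split connected reductive group with maximal torus $T$, $M\subseteq G$ a Levi subgroup containing $T$, $\tilde W_M=X^*(T)\rtimes W_M$, and $W^M=\{w\in W:\ell(s_\alpha w)>\ell(w)\ \forall\alpha\in\Delta_M\}$. Let $\tilde z\in\tilde W_M$ and let $r\in\tilde W_M$ be an affine reflection with $\ell(\tilde z)<\ell(r\tilde z)$ (lengths in $\tilde W_M$). Then for every $w^M\in W^M$, $\ell((w^M)^{-1}\tilde zw^M)<\ell((w^M)^{-1}r\tilde zw^M)$ (lengths in $\tilde W$).
   Context: $W=W(G,T)$, $W_M=W(M,T)\subseteq W$, $\Delta_M$ the simple roots of $(M,B\cap M,T)$, $\tilde W=X^*(T)\rtimes W$. Length functions on $\tilde W$ (resp. $\tilde W_M$) are defined via the dominant base alcove $A_0$ of $G$ (resp. the dominant base alcove of $M$), extended to the extended affine Weyl group by $\ell(\tilde w\delta)=\ell(\tilde w)$ for $\delta$ in the stabilizer of the base alcove. Affine reflections are elements $s_\alpha t_{m\alpha}$, $m\in\mathbb Z$. *)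

(* Defs.v *)
From HB Require Import structures.
From mathcomp Require Import all_boot all_order all_algebra.
Set Implicit Arguments. Unset Strict Implicit. Unset Printing Implicit Defensive.
Import Order.TTheory GRing.Theory Num.Theory.
Local Open Scope ring_scope.

(* X^*(T) = Z^n (row vectors); X_*(T) = Z^n via the dual basis;
   the perfect pairing <x, y> is the dot product. *)
Definition pairZ n (x y : 'rV[int]_n) : int := \sum_(i < n) x ord0 i * y ord0 i.
Definition pairQ n (x : 'rV[rat]_n) (y : 'rV[int]_n) : rat :=
  \sum_(i < n) x ord0 i * (y ord0 i)%:~R.

(* a root together with its coroot *)
Definition rcpair n := ('rV[int]_n * 'rV[int]_n)%type.

Definition reflV n (p : rcpair n) (x : 'rV[int]_n) := x - pairZ x p.2 *: p.1.
Definition coreflV n (p : rcpair n) (y : 'rV[int]_n) := y - pairZ p.1 y *: p.2.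
Definition reflM n (p : rcpair n) : 'M[int]_n := 1%:M - (p.2)^T *m p.1.

(* Reduced root datum (= root datum of a split connected reductive group). *)
Record rootDatum (n : nat) := RootDatum {
  rd_roots : seq (rcpair n);
  rd_uniq : uniq (map fst rd_roots);
  rd_two : forall p, p \in rd_roots -> pairZ p.1 p.2 = 2;
  rd_refl : forall p q, p \in rd_roots -> q \in rd_roots ->
              (reflV p q.1, coreflV p q.2) \in rd_roots;
  rd_reduced : forall p q, p \in rd_roots -> q \in rd_roots -> q.1 != 2 *: p.1
}.

(* Positive system Phi^+ (from the Borel B >= T), given by a regular
   cocharacter h: Phi^+ = {a : <a,h> > 0}. *)
Definition posRoots n (R : rootDatum n) (h : 'rV[int]_n) :=
  [seq p <- rd_roots R | 0 < pairZ p.1 h].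

(* Levi M >= T : the centralizer of a cocharacter mu; Phi_M = {a : <a,mu> = 0} *)
Definition leviRoots n (R : rootDatum n) (mu : 'rV[int]_n) :=
  [seq p <- rd_roots R | pairZ p.1 mu == 0].
Definition leviPos n (R : rootDatum n) (h mu : 'rV[int]_n) :=
  [seq p <- rd_roots R | (pairZ p.1 mu == 0) && (0 < pairZ p.1 h)].
Definition leviSimple n (R : rootDatum n) (h mu : 'rV[int]_n) :=
  [seq p <- leviPos R h mu |
     ~~ has (fun q => has (fun q' => q.1 + q'.1 == p.1) (leviPos R h mu))
            (leviPos R h mu)].

Inductive inW n (S : seq (rcpair n)) : 'M[int]_n -> Prop :=
| inW1 : inW S 1%:M
| inWS p w : p \in S -> inW S w -> inW S (w *m reflM p).

(* Elements of X^*(T) x| W: a pair (lambda, w) is the affine map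
   y |-> lambda + w(y) = t_lambda w, with w acting on row vectors by *m. *)
Definition affT n := ('rV[int]_n * 'M[int]_n)%type.
Definition toQ n (v : 'rV[int]_n) : 'rV[rat]_n := map_mx (fun z : int => z%:~R) v.
Definition toQM n (m : 'M[int]_n) : 'M[rat]_n := map_mx (fun z : int => z%:~R) m.
Definition act n (x : affT n) (y : 'rV[rat]_n) : 'rV[rat]_n :=
  toQ x.1 + y *m toQM x.2.
Definition acomp n (x1 x2 : affT n) : affT n := (x1.1 + x2.1 *m x1.2, x2.2 *m x1.2).
Definition ainv n (x : affT n) : affT n := (- (x.1 *m invmx x.2), invmx x.2).
Definition ofW n (w : 'M[int]_n) : affT n := (0, w).

(* Affine reflections of ~W_M : s_a t_{m a}, a in Phi_M, m in Z;
   as an affine map  y |-> s_a(y + m a) = s_a(y) - m a. *)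
Definition affRefl n (S : seq (rcpair n)) (r : affT n) : Prop :=
  exists2 p, p \in S & exists m : int, r = (- (m *: p.1), reflM p).

(* A point in the interior of the dominant base alcove
   A_0 = {y : 0 < <y,a^v> < 1 for all a in Phi^+}:  y0 = 2rho / N. *)
Definition rho2 n (R : rootDatum n) h : 'rV[int]_n := \sum_(p <- posRoots R h) p.1.
Definition alcPt n (R : rootDatum n) h : 'rV[rat]_n :=
  ((1 + \sum_(p <- posRoots R h) `|pairZ (rho2 R h) p.2|)%:~R)^-1 *: toQ (rho2 R h).

(* Number of affine root hyperplanes H_{a,k} = {<y,a^v> = k}, a in P (a
   positive system), separating the base alcove (containing y0) from x(A_0):
   for each a it is |floor <x(y0), a^v>|, since <y0,a^v> lies in (0,1). *)
Definition lenP n (P : seq (rcpair n)) (y0 : 'rV[rat]_n) (x : affT n) : nat :=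
  \sum_(p <- P) `| Num.floor (pairQ (act x y0) p.2) |%N.

Definition lenG n (R : rootDatum n) h (x : affT n) : nat :=
  lenP (posRoots R h) (alcPt R h) x.
(* length in ~W_M (dominant base alcove of M, which contains A_0) *)
Definition lenM n (R : rootDatum n) h mu (x : affT n) : nat :=
  lenP (leviPos R h mu) (alcPt R h) x.

Definition inWM n (R : rootDatum n) h mu (w : 'M[int]_n) : Prop :=
  inW (rd_roots R) w /\
  forall p, p \in leviSimple R h mu ->
    (lenG R h (ofW w) < lenG R h (acomp (ofW (reflM p)) (ofW w)))%N.

(* Main.v *)
Require Import Defs.
From HB Require Import structures.
From mathcomp Require Import all_boot all_order all_algebra.
From mathcomp Require Import zify ring lra.
Set Implicit Arguments. Unset Strict Implicit. Unset Printing Implicit Defensive.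
Import Order.TTheory GRing.Theory Num.Theory.
Local Open Scope ring_scope.

Section Basic.
Variable n : nat.
Implicit Types (x y c : 'rV[int]_n) (M A B : 'M[int]_n) (u v : 'rV[rat]_n).

Lemma pairZE x c : pairZ x c = (x *m c^T) ord0 ord0.
Proof. by rewrite /pairZ !mxE; apply: eq_bigr => i _; rewrite mxE. Qed.

Lemma pairQE u c : pairQ u c = (u *m (toQ c)^T) ord0 ord0.
Proof. by rewrite /pairQ !mxE; apply: eq_bigr => i _; rewrite !mxE. Qed.

Lemma toQM_mul A B : toQM (A *m B) = toQM A *m toQM B.
Proof. by rewrite /toQM map_mxM. Qed.
Lemma toQ_mul x A : toQ (x *m A) = toQ x *m toQM A.
Proof. by rewrite /toQ /toQM map_mxM. Qed.
Lemma toQD x y : toQ (x + y) = toQ x + toQ y.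
Proof. by rewrite /toQ map_mxD. Qed.
Lemma toQN x : toQ (- x) = - toQ x.
Proof. by rewrite /toQ map_mxN. Qed.
Lemma toQZ (k : int) x : toQ (k *: x) = k%:~R *: toQ x.
Proof. by apply/rowP => i; rewrite !mxE intrM. Qed.
Lemma toQ0 : toQ (0 : 'rV[int]_n) = 0.
Proof. by apply/rowP => i; rewrite !mxE. Qed.
Lemma toQM1 : toQM (1%:M : 'M[int]_n) = 1%:M.
Proof. by rewrite /toQM map_mx1. Qed.
Lemma toQ_tr A : toQM A^T = (toQM A)^T.
Proof. by rewrite /toQM map_trmx. Qed.
End Basic.

Section Pair.
Variable n : nat.
Implicit Types (x y c : 'rV[int]_n) (M A B : 'M[int]_n) (u v : 'rV[rat]_n).

Lemma pairZC x y : pairZ x y = pairZ y x.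
Proof. by rewrite /pairZ; apply: eq_bigr => i _; rewrite mulrC. Qed.

Lemma row11 (R : pzRingType) m (a : 'M[R]_1) (B : 'M[R]_(1, m)) : a *m B = a ord0 ord0 *: B.
Proof. by rewrite {1}[a]mx11_scalar mul_scalar_mx. Qed.

Lemma reflVE (p : rcpair n) x : reflV p x = x *m reflM p.
Proof.
rewrite /reflV /reflM mulmxBr mulmx1 mulmxA row11 -pairZE //.
Qed.

Lemma coreflVE (p : rcpair n) y : coreflV p y = y *m (reflM p)^T.
Proof.
rewrite /coreflV /reflM linearB /= trmx1 trmx_mul trmxK mulmxBr mulmx1 mulmxA row11 -pairZE pairZC //.
Qed.

Lemma pairQ_mul u c M : pairQ (u *m toQM M) c = pairQ u (c *m M^T).
Proof. by rewrite !pairQE toQ_mul trmx_mul toQ_tr trmxK mulmxA. Qed.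

Lemma pairZ_mul x c M : pairZ (x *m M) c = pairZ x (c *m M^T).
Proof. by rewrite !pairZE trmx_mul trmxK mulmxA. Qed.

Lemma pairQD u v c : pairQ (u + v) c = pairQ u c + pairQ v c.
Proof. by rewrite !pairQE mulmxDl mxE. Qed.
Lemma pairQN u c : pairQ (- u) c = - pairQ u c.
Proof. by rewrite !pairQE mulNmx mxE. Qed.
Lemma pairQZ (k : rat) u c : pairQ (k *: u) c = k * pairQ u c.
Proof. by rewrite !pairQE -scalemxAl mxE. Qed.
Lemma pairQ_toQ x c : pairQ (toQ x) c = (pairZ x c)%:~R.
Proof.
rewrite /pairQ /pairZ rmorph_sum /=; apply: eq_bigr => i _; by rewrite mxE intrM.
Qed.
Lemma pairQ0 c : pairQ 0 c = 0.
Proof. by rewrite pairQE mul0mx mxE. Qed.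
Lemma pairQ_rD u c d : pairQ u (c + d) = pairQ u c + pairQ u d.
Proof. by rewrite !pairQE toQD linearD /= mulmxDr mxE. Qed.
Lemma pairQ_rN u c : pairQ u (- c) = - pairQ u c.
Proof. by rewrite !pairQE toQN linearN /= mulmxN mxE. Qed.
Lemma pairQ_rZ u (k : int) c : pairQ u (k *: c) = k%:~R * pairQ u c.
Proof. by rewrite !pairQE toQZ linearZ /= -scalemxAr mxE. Qed.
Lemma pairZD x y c : pairZ (x + y) c = pairZ x c + pairZ y c.
Proof. by rewrite !pairZE mulmxDl mxE. Qed.
Lemma pairZN x c : pairZ (- x) c = - pairZ x c.
Proof. by rewrite !pairZE mulNmx mxE. Qed.
Lemma pairZZ (k : int) x c : pairZ (k *: x) c = k * pairZ x c.
Proof. by rewrite !pairZE -scalemxAl mxE. Qed.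
Lemma pairZ_rD x c d : pairZ x (c + d) = pairZ x c + pairZ x d.
Proof. by rewrite pairZC pairZD !(pairZC x). Qed.
Lemma pairZ_rN x c : pairZ x (- c) = - pairZ x c.
Proof. by rewrite pairZC pairZN !(pairZC x). Qed.
Lemma pairZ_rZ x (k : int) c : pairZ x (k *: c) = k * pairZ x c.
Proof. by rewrite pairZC pairZZ !(pairZC x). Qed.
Lemma pairZ_sum (I : Type) (r : seq I) (F : I -> 'rV[int]_n) c :
  pairZ (\sum_(i <- r) F i) c = \sum_(i <- r) pairZ (F i) c.
Proof.
elim: r => [|a r IH]; first by rewrite !big_nil pairZE mul0mx mxE.
by rewrite !big_cons pairZD IH.
Qed.
End Pair.

Section Weyl.
Variable n : nat.
Implicit Types (x y : 'rV[int]_n) (M A B W : 'M[int]_n) (u v : 'rV[rat]_n)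
  (p q : rcpair n) (S Phi : seq (rcpair n)).

Definition closedR Phi p := pairZ p.1 p.2 = 2 /\
  forall c : rcpair n, c \in Phi -> (reflV p c.1, coreflV p c.2) \in Phi.

Lemma reflM2 p : pairZ p.1 p.2 = 2 -> reflM p *m reflM p = 1%:M.
Proof.
move=> h2; rewrite /reflM mulmxBl mul1mx mulmxBr mulmx1.
have -> : (p.2)^T *m p.1 *m ((p.2)^T *m p.1) = 2%:R *: ((p.2)^T *m p.1).
  have e : p.1 *m (p.2)^T = (2%:R)%:M by rewrite [LHS]mx11_scalar -pairZE h2.
  by rewrite mulmxA -[(p.2)^T *m p.1 *m (p.2)^T](mulmxA) e mul_mx_scalar -scalemxAl.
rewrite scaler_nat mulr2n; apply/matrixP => i j; rewrite !mxE; ring.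
Qed.

Lemma inW_left S W p : inW S W -> p \in S -> inW S (reflM p *m W).
Proof.
move=> hW hp; elim: hW => [|q w hq _ IH].
  by rewrite mulmx1 -[reflM p]mul1mx; apply: inWS => //; exact: inW1.
by rewrite mulmxA; apply: inWS.
Qed.

Lemma inW_unit S W : (forall p, p \in S -> pairZ p.1 p.2 = 2) -> inW S W -> W \in unitmx.
Proof.
move=> h2; elim => [|q w hq _ IH]; first by rewrite unitmx1.
rewrite unitmx_mul IH /=.
by case: (mulmx1_unit (reflM2 (h2 _ hq))).
Qed.

Lemma invmx_refl p : pairZ p.1 p.2 = 2 -> invmx (reflM p) = reflM p.
Proof.
move=> h2; have h := reflM2 h2; have [u _] := mulmx1_unit h.
by rewrite -[LHS]mulmx1 -h mulmxA mulVmx // mul1mx.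
Qed.

Lemma inW_inv S W : (forall p, p \in S -> pairZ p.1 p.2 = 2) -> inW S W -> inW S (invmx W).
Proof.
move=> h2 hW; elim: hW => [|q w hq hw IH]; first by rewrite invmx1; exact: inW1.
have uw := inW_unit h2 hw.
have h := reflM2 (h2 _ hq); have [uq _] := mulmx1_unit h.
have -> : invmx (w *m reflM q) = reflM q *m invmx w.
  have hu : w *m reflM q \in unitmx by rewrite unitmx_mul uw uq.
  have e : (w *m reflM q) *m (reflM q *m invmx w) = 1%:M.
    by rewrite -mulmxA (mulmxA (reflM q)) h mul1mx mulmxV.
  by rewrite -[LHS]mulmx1 -e !mulmxA -(mulmxA _ w) (mulVmx hu) mul1mx.
exact: inW_left.
Qed.

Lemma L_co S Phi W : (forall p, p \in S -> closedR Phi p) -> inW S W ->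
  forall c, c \in Phi -> exists2 d, d \in Phi & d.2 = c.2 *m W^T /\ d.1 *m W = c.1.
Proof.
move=> hS; elim => [|q w hq hw IH] c hc.
  by exists c => //; rewrite trmx1 !mulmx1.
have [h2 hcl] := hS _ hq.
have [d hd [e1 e2]] := IH _ (hcl _ hc).
exists d => //; split.
  by rewrite e1 /= coreflVE trmx_mul mulmxA.
by rewrite mulmxA e2 /= reflVE -mulmxA reflM2 // mulmx1.
Qed.
End Weyl.

Section Floor.
Local Notation fl := (@Num.floor rat).

Lemma flS (x : rat) (k : int) : fl (x + k%:~R) = fl x + k.
Proof. by rewrite floorDrz ?intr_int // intrKfloor. Qed.

Lemma flN (x : rat) : x \isn't a Num.int -> fl (- x) = - fl x - 1.
Proof.
move=> hx; have := ceilNfloor x; rewrite ceil_floor hx /= => h.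
by rewrite -[fl (- x)]opprK -h opprD.
Qed.

Lemma fl_mono (x y : rat) : x <= y -> fl x <= fl y.
Proof. exact: le_floor. Qed.

Lemma flSN (x : rat) (k : int) : fl (x - k%:~R) = fl x - k.
Proof. by have := flS x (- k); rewrite mulrNz. Qed.

Lemma key_weak (a0 b0 a1 b1 : rat) (e : int) :
  ((0 <= a0 - b0 + e%:~R) && (0 <= a1 - b1 + e%:~R)) ||
  ((a0 - b0 + e%:~R <= 0) && (a1 - b1 + e%:~R <= 0)) ->
  (`|fl a0 - fl a1|%N + `|fl b0 - fl b1|%N <=
   `|fl a0 - fl (b1 - e%:~R)|%N + `|fl b0 - fl (a1 + e%:~R)|%N)%N.
Proof.
have e1 : forall x y : rat, 0 <= x - y + e%:~R -> fl y - e <= fl x.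
  move=> x y h; rewrite -flSN; apply: fl_mono; lra.
have e2 : forall x y : rat, x - y + e%:~R <= 0 -> fl x <= fl y - e.
  move=> x y h; rewrite -flSN; apply: fl_mono; lra.
rewrite flSN flS.
case/orP => /andP [h1 h2].
  have := e1 _ _ h1; have := e1 _ _ h2; lia.
have := e2 _ _ h1; have := e2 _ _ h2; lia.
Qed.
Lemma prod_pos (x y : rat) : 0 < x * y -> (0 < x) && (0 < y) || (x < 0) && (y < 0).
Proof.
move=> h; case: (ltrgt0P x) => hx /=.
- by rewrite orbF -(pmulr_rgt0 _ hx).
- by rewrite -(nmulr_rgt0 _ hx).
- by move: h; rewrite hx mul0r ltxx.
Qed.

Lemma key_strict (g0 g1 : rat) (m : int) :
  g0 \isn't a Num.int -> g1 \isn't a Num.int ->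
  0 < (g0 + m%:~R) * (g1 + m%:~R) ->
  (`|fl g0 - fl g1|%N + `|fl (- g0) - fl (- g1)|%N <
   `|fl g0 - fl (- g1 - (m * 2)%:~R)|%N + `|fl (- g0) - fl (g1 + (m * 2)%:~R)|%N)%N.
Proof.
move=> h0 h1 /prod_pos hp.
rewrite flSN flS !flN //.
case/orP: hp => /andP [p0 p1].
  have : - m <= fl g0 by rewrite floor_ge_int mulrNz; lra.
  have : - m <= fl g1 by rewrite floor_ge_int mulrNz; lra.
  lia.
have : fl g0 < - m by rewrite floor_lt_int mulrNz; lra.
have : fl g1 < - m by rewrite floor_lt_int mulrNz; lra.
lia.
Qed.
End Floor.

Lemma sign_help (c A B : rat) : ((0<A)&&(0<B)) || ((A<0)&&(B<0)) -> ((0 <= c*A) && (0 <= c*B)) || ((c*A <= 0) && (c*B <= 0)).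
Proof.
case/orP => /andP [hA hB]; case: (lerP 0 c) => hc.
- by apply/orP; left; apply/andP; split; nra.
- by apply/orP; right; apply/andP; split; nra.
- by apply/orP; right; apply/andP; split; nra.
- by apply/orP; left; apply/andP; split; nra.
Qed.

Section Core.
Variable n : nat.
Variable Phi : seq (rcpair n).
Hypothesis uPhi : uniq Phi.
Local Notation fl := (@Num.floor rat).
Implicit Types (p c : rcpair n) (x y : 'rV[int]_n) (u : 'rV[rat]_n).

Definition sref (p c : rcpair n) : rcpair n := (reflV p c.1, coreflV p c.2).
Definition fpt (p0 x : 'rV[rat]_n) (b : rcpair n) := `|fl (pairQ p0 b.2) - fl (pairQ x b.2)|%N.
Definition Sig (p0 x : 'rV[rat]_n) := (\sum_(b <- Phi) fpt p0 x b)%N.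
Definition reflpt (be : rcpair n) (m : int) (u : 'rV[rat]_n) :=
  u *m toQM (reflM be) - m%:~R *: toQ be.1.

Lemma coreflV2 p y : pairZ p.1 p.2 = 2 -> coreflV p (coreflV p y) = y.
Proof.
by move=> h; rewrite !coreflVE -mulmxA -trmx_mul reflM2 // trmx1 mulmx1.
Qed.
Lemma reflV2 p x : pairZ p.1 p.2 = 2 -> reflV p (reflV p x) = x.
Proof. by move=> h; rewrite !reflVE -mulmxA reflM2 // mulmx1. Qed.

Lemma sref_inv p c : pairZ p.1 p.2 = 2 -> sref p (sref p c) = c.
Proof. by move=> h; case: c => x y; rewrite /sref /= reflV2 // coreflV2. Qed.

Lemma sum_sref_gen (R : Type) (idx : R) (op : Monoid.com_law idx) be (F : rcpair n -> R) : closedR Phi be ->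
  \big[op/idx]_(b <- Phi) F (sref be b) = \big[op/idx]_(b <- Phi) F b.
Proof.
move=> [h2 hcl]; rewrite -(big_map (sref be) xpredT F); apply: perm_big.
apply: uniq_perm => //.
  rewrite map_inj_uniq //; apply: (can_inj (g := sref be)) => c; exact: sref_inv.
move=> b; apply/mapP/idP => [[c hc ->]|hb]; first exact: hcl.
by exists (sref be b); [exact: hcl | rewrite sref_inv].
Qed.

Lemma pair_reflpt be (m : int) u (c : 'rV[int]_n) : pairQ (reflpt be m u) c =
  pairQ u (coreflV be c) - (m * pairZ be.1 c)%:~R.
Proof.
rewrite /reflpt pairQD pairQN pairQ_mul -coreflVE pairQZ pairQ_toQ intrM //.
Qed.

Lemma pair_corefl be (y : 'rV[int]_n) : pairZ be.1 be.2 = 2 -> pairZ be.1 (coreflV be y) = - pairZ be.1 y.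
Proof. move=> h; rewrite /coreflV pairZ_rD pairZ_rN pairZ_rZ h; ring. Qed.

Lemma pairQ_corefl be u (y : 'rV[int]_n) : pairQ u (coreflV be y) = pairQ u y - (pairZ be.1 y)%:~R * pairQ u be.2.
Proof. by rewrite /coreflV pairQ_rD pairQ_rN pairQ_rZ. Qed.

Lemma core be (m : int) (p0 u : 'rV[rat]_n) : be \in Phi -> closedR Phi be ->
  pairQ p0 be.2 \isn't a Num.int -> pairQ u be.2 \isn't a Num.int ->
  0 < (pairQ p0 be.2 + m%:~R) * (pairQ u be.2 + m%:~R) ->
  (Sig p0 u < Sig p0 (reflpt be m u))%N.
Proof.
move=> hbe [h2 hcl] ni0 ni1 hpos.
set ru := reflpt be m u.
have weak : forall b, (fpt p0 u b + fpt p0 u (sref be b) <= fpt p0 ru b + fpt p0 ru (sref be b))%N.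
  move=> b; rewrite /fpt /= !pair_reflpt coreflV2 // pair_corefl // mulrN mulrNz opprK.
  apply: key_weak.
  rewrite !pairQ_corefl.
  set c := pairZ be.1 b.2.
  have e : forall a g : rat, a - (a - c%:~R * g) + (m * c)%:~R = c%:~R * (g + m%:~R).
    by move=> a g; rewrite intrM; ring.
  rewrite !e. apply: sign_help; exact: prod_pos.
have strict : (fpt p0 u be + fpt p0 u (sref be be) < fpt p0 ru be + fpt p0 ru (sref be be))%N.
  have e1 : coreflV be be.2 = - be.2.
    by rewrite /coreflV h2 scaler_nat mulr2n opprD addrA subrr add0r.
  rewrite /fpt /= !pair_reflpt coreflV2 // !e1 !pairQ_rN.
  rewrite pairZ_rN h2 mulrN mulrNz opprK.
  exact: key_strict.
have : (\sum_(b <- Phi) (fpt p0 u b + fpt p0 u (sref be b)) <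
        \sum_(b <- Phi) (fpt p0 ru b + fpt p0 ru (sref be b)))%N.
  rewrite (big_rem be hbe) [X in (_ < X)%N](big_rem be hbe) /=.
  apply: leq_trans (leq_add strict (leq_sum _ (fun b _ => weak b))) => //.
rewrite !big_split /= !(sum_sref_gen _ _ (conj h2 hcl)) -/(Sig p0 u) -/(Sig p0 ru).
lia.
Qed.
Lemma sum_sref be (F : rcpair n -> nat) : closedR Phi be ->
  (\sum_(b <- Phi) F (sref be b) = \sum_(b <- Phi) F b)%N.
Proof. exact: sum_sref_gen. Qed.
End Core.

Section Conv.
Variable n : nat.
Variable Phi : seq (rcpair n).
Variable h : 'rV[int]_n.
Hypothesis uPhi : uniq Phi.
Hypothesis negPhi : forall b, b \in Phi -> (- b.1, - b.2) \in Phi.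
Hypothesis hreg : forall b, b \in Phi -> pairZ b.1 h != 0.
Local Notation fl := (@Num.floor rat).
Local Notation pos := (fun p : rcpair n => 0 < pairZ p.1 h).

Definition rneg (b : rcpair n) : rcpair n := (- b.1, - b.2).

Lemma conv (p0 x : 'rV[rat]_n) :
  (forall b, b \in Phi -> pairQ p0 b.2 \isn't a Num.int) ->
  (forall b, b \in Phi -> pairQ x b.2 \isn't a Num.int) ->
  (forall b, b \in Phi -> pos b -> fl (pairQ p0 b.2) = 0) ->
  Sig Phi p0 x = (2 * \sum_(p <- [seq p <- Phi | pos p]) `|fl (pairQ x p.2)|%N)%N.
Proof.
move=> ni0 nix fl0.
rewrite /Sig (bigID pos) /=.
have hp : perm_eq [seq b <- Phi | ~~ pos b] (map rneg [seq b <- Phi | pos b]).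
  apply: uniq_perm; first exact: filter_uniq.
    rewrite map_inj_uniq ?filter_uniq //.
    by move=> [a b] [c d] [] /eqP; rewrite eqr_opp => /eqP -> /eqP; rewrite eqr_opp => /eqP ->.
  move=> b; rewrite mem_filter; apply/andP/mapP.
    move=> [hnp hb]; exists (rneg b); last by rewrite /rneg /= !opprK; case: b {hnp hb}.
    rewrite mem_filter negPhi // andbT /= pairZN oppr_gt0.
    by rewrite lt_neqAle hreg //= leNgt.
  move=> [c]; rewrite mem_filter => /andP [hc hcP] ->; split; last by apply: negPhi.
  by rewrite /= pairZN oppr_gt0 -leNgt ltW.
have e2 : (\sum_(i <- Phi | ~~ pos i) fpt p0 x i = \sum_(i <- Phi | pos i) fpt p0 x (rneg i))%N.
  by rewrite -big_filter (perm_big _ hp) big_map big_filter.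
rewrite e2 -big_split /= mul2n -addnn big_seq_cond [in RHS]big_filter [in RHS]big_seq_cond.
rewrite -big_split /=.
apply: eq_bigr => b /andP [hb hbp]; rewrite /fpt /= !pairQ_rN !flN ?ni0 ?nix // fl0 //.
by rewrite sub0r; congr (_ + _)%N; lia.
Qed.
End Conv.

Section RD.
Variable n : nat.
Variable R : rootDatum n.
Variable h : 'rV[int]_n.
Local Notation Phi := (rd_roots R).
Local Notation fl := (@Num.floor rat).

Lemma rd_uniqP : uniq Phi.
Proof. exact: (map_uniq (rd_uniq R)). Qed.

Lemma rd_closed p : p \in Phi -> closedR Phi p.
Proof. move=> hp; split; first exact: (rd_two hp). by move=> c hc; apply: rd_refl. Qed.

Lemma refl_self (p : rcpair n) : pairZ p.1 p.2 = 2 -> reflV p p.1 = - p.1 /\ coreflV p p.2 = - p.2.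
Proof.
move=> h2; rewrite /reflV /coreflV h2; split; apply/rowP => i; rewrite !mxE; ring.
Qed.

Lemma rd_neg b : b \in Phi -> (- b.1, - b.2) \in Phi.
Proof.
move=> hb; have := rd_refl hb hb; have [e1 e2] := refl_self (rd_two hb).
by rewrite e1 e2.
Qed.

Lemma rho_pos b : b \in posRoots R h -> 0 < pairZ (rho2 R h) b.2.
Proof.
rewrite mem_filter => /andP [hbh hb].
rewrite /rho2 pairZ_sum big_filter big_mkcond /=.
set g := fun a : rcpair n => if 0 < pairZ a.1 h then pairZ a.1 b.2 else 0.
have hcl := rd_closed hb.
have hs : \sum_(a <- Phi) g a + \sum_(a <- Phi) g a =
          \sum_(a <- Phi) (g a + g (sref b a)).
  by rewrite big_split /= (sum_sref_gen rd_uniqP _ _ hcl).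
have tpos : forall a, 0 <= g a + g (sref b a).
  move=> a; rewrite /g /sref /= /reflV pairZD pairZN pairZZ pairZD pairZN pairZZ (rd_two hb).
  set x := pairZ a.1 b.2; set y := pairZ a.1 h; set z := pairZ b.1 h.
  move: hbh; rewrite -/z => hz.
  case: (ltrP 0 y) => hy; case: (ltrP 0 (y - x * z)) => hyz; nia.
have tb : 0 < g b + g (sref b b).
  have [e1 e2] := refl_self (rd_two hb).
  rewrite /g /sref /= e1 pairZN hbh (rd_two hb) oppr_gt0 (_ : (pairZ b.1 h < 0) = false) //; last by rewrite ltNge (ltW hbh).
have : 0 < \sum_(a <- Phi) (g a + g (sref b a)).
  rewrite (big_rem b hb) /=; apply: (lt_le_trans tb); rewrite lerDl.
  by apply: sumr_ge0 => a _.
rewrite -hs => H; suff : 0 < \sum_(a <- Phi) g a by []; lia.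
Qed.
End RD.

Lemma frac_prop (k N : int) : 0 < N -> `|k| < N -> k != 0 ->
  ((N%:~R : rat)^-1 * k%:~R) \isn't a Num.int /\
  Num.floor ((N%:~R : rat)^-1 * k%:~R) = (if 0 < k then 0 else -1).
Proof.
move=> hN hk hk0.
set q := (N%:~R : rat)^-1 * k%:~R.
have hN' : (0 : rat) < N%:~R by rewrite ltr0z.
have hq : q * N%:~R = k%:~R by rewrite /q; field; rewrite gt_eqF.
have fq : Num.floor q = (if 0 < k then 0 else -1).
  apply: floor_def; case: ifP => hk1.
    have k1 : (0 : rat) < k%:~R by rewrite ltr0z.
    have k2 : (k%:~R : rat) < N%:~R by rewrite ltr_int; apply: le_lt_trans hk; exact: ler_norm.
    rewrite /= add0r; apply/andP; split; nra.
  have k1 : (k%:~R : rat) < 0 by rewrite ltrz0 lt_neqAle hk0 /= leNgt hk1.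
  have k2 : (- N%:~R : rat) < k%:~R.
    rewrite -mulrNz ltr_int ltrNl; apply: le_lt_trans hk; rewrite -normrN; exact: ler_norm.
  rewrite /= addNr; apply/andP; split; nra.
split => //; rewrite intrEfloor fq; case: ifP => hk1.
  have k1 : (0 : rat) < k%:~R by rewrite ltr0z.
  by apply/negP => /eqP e; move: hq; rewrite -e mul0r => /eqP; rewrite eq_sym intr_eq0 (negPf hk0).
have k1 : (k%:~R : rat) < 0 by rewrite ltrz0 lt_neqAle hk0 /= leNgt hk1.
apply/negP => /eqP e; move: hq; rewrite -e /= => hq.
have k2 : (- N%:~R : rat) < k%:~R.
  rewrite -mulrNz ltr_int ltrNl; apply: le_lt_trans hk; rewrite -normrN; exact: ler_norm.
move: k2; rewrite -hq; lra.
Qed.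

Section RD2.
Variable n : nat.
Variable R : rootDatum n.
Variable h : 'rV[int]_n.
Hypothesis hreg : forall p, p \in rd_roots R -> pairZ p.1 h != 0.
Local Notation Phi := (rd_roots R).

Lemma term_le (I : eqType) (r : seq I) (F : I -> int) i : i \in r ->
  `|F i| <= \sum_(j <- r) `|F j|.
Proof.
move=> hi; rewrite (big_rem i hi) /= lerDl; exact: sumr_ge0.
Qed.

Lemma y0_prop b : b \in Phi ->
  pairQ (alcPt R h) b.2 \isn't a Num.int /\
  Num.floor (pairQ (alcPt R h) b.2) = (if 0 < pairZ b.1 h then 0 else -1).
Proof.
move=> hb.
set S := \sum_(p <- posRoots R h) `|pairZ (rho2 R h) p.2|.
have S0 : 0 <= S by apply: sumr_ge0.
have -> : pairQ (alcPt R h) b.2 = (((1 + S)%:~R : rat)^-1 * (pairZ (rho2 R h) b.2)%:~R).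
  by rewrite /alcPt pairQZ pairQ_toQ.
have [hp|hnp] := boolP (0 < pairZ b.1 h).
  have hbP : b \in posRoots R h by rewrite mem_filter hp.
  have K0 := rho_pos hbP.
  have := frac_prop (k := pairZ (rho2 R h) b.2) (N := 1 + S).
  rewrite K0; apply; first lia.
    have := term_le (fun p : rcpair n => pairZ (rho2 R h) p.2) hbP; rewrite -/S => H; rewrite -[`|_|]add0r; exact: ltr_leD.
  by rewrite gt_eqF.
have hbP : rneg b \in posRoots R h.
  rewrite mem_filter rd_neg // andbT /= pairZN oppr_gt0 lt_neqAle hreg //=.
  by rewrite leNgt.
have K0 := rho_pos hbP; move: K0; rewrite /= pairZ_rN oppr_gt0 => K0.
have := frac_prop (k := pairZ (rho2 R h) b.2) (N := 1 + S).
rewrite (lt_gtF K0) /=; apply; first lia.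
  have := term_le (fun p : rcpair n => pairZ (rho2 R h) p.2) hbP; rewrite -/S /= pairZ_rN normrN => H; rewrite -[`|_|]add0r; exact: ltr_leD.
by rewrite lt_eqF.
Qed.
End RD2.

Section Helpers.
Variable n : nat.
Local Notation fl := (@Num.floor rat).
Implicit Types (u v : 'rV[rat]_n) (W : 'M[int]_n) (p : rcpair n).

Lemma act_comp (x y : affT n) u : act (acomp x y) u = act x (act y u).
Proof.
rewrite /act /acomp /= toQD toQ_mul toQM_mul mulmxDl mulmxA; by rewrite addrA.
Qed.

Lemma act_ofW W u : act (ofW W) u = u *m toQM W.
Proof. by rewrite /act /ofW /= toQ0 add0r. Qed.

Lemma act_ainv W u : act (ainv (ofW W)) u = u *m toQM (invmx W).
Proof. by rewrite /act /ainv /ofW /= mul0mx oppr0 toQ0 add0r. Qed.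

Lemma act_refl p (m : int) u : act (- (m *: p.1), reflM p) u = reflpt p m u.
Proof. by rewrite /act /reflpt /= toQN toQZ addrC. Qed.

Lemma ni_addl (k : int) (x : rat) : x \isn't a Num.int -> k%:~R + x \isn't a Num.int.
Proof. by rewrite rpredDl // intr_int. Qed.

Lemma reflpt_inv p (m : int) u : pairZ p.1 p.2 = 2 -> reflpt p m (reflpt p m u) = u.
Proof.
move=> h2; rewrite /reflpt mulmxBl -mulmxA -toQM_mul reflM2 // toQM1 mulmx1.
rewrite -scalemxAl -toQ_mul -reflVE (refl_self h2).1 toQN scalerN; by rewrite opprK addrK.
Qed.

Lemma fl_pos (x : rat) : x \isn't a Num.int -> fl x = 0 -> 0 < x.
Proof.
move=> hx hf; have := floor_le x; rewrite hf /= => h0.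
rewrite lt_neqAle h0 andbT; apply/negP => /eqP e; move: hx; by rewrite -e rpred0.
Qed.

Lemma fl_neg (x : rat) : fl x = -1 -> x < 0.
Proof. by move=> hf; have := floorD1_gt x; rewrite hf addNr. Qed.

Definition sameFl (x y : rat) := [/\ fl x = fl y, x \isn't a Num.int & y \isn't a Num.int].

Lemma sameFl_sign x y (k : int) : sameFl x y -> 0 < (x + k%:~R) * (y + k%:~R).
Proof.
case=> e nx ny.
have lx : (fl x)%:~R < x.
  by rewrite lt_neqAle floor_le andbT; apply/negP => /eqP ex; move: nx; rewrite -ex intr_int.
have ly : (fl y)%:~R < y.
  by rewrite lt_neqAle floor_le andbT; apply/negP => /eqP ey; move: ny; rewrite -ey intr_int.
have ux := floorD1_gt x; have uy := floorD1_gt y.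
move: ly uy; rewrite -e => ly uy.
set F := fl x; move: lx ux ly uy; rewrite -/F !intrD /= => lx ux ly uy.
case: (lerP (- F) k) => hk.
  have : ((- F)%:~R : rat) <= k%:~R by rewrite ler_int.
  rewrite mulrNz => hk'; apply: mulr_gt0; lra.
have : (k%:~R : rat) <= (- F - 1)%:~R by rewrite ler_int; lia.
rewrite intrB mulrNz => hk'; rewrite -mulrNN; apply: mulr_gt0; lra.
Qed.

Lemma sign3 (X X0 Y Y0 : rat) : 0 < X0 * Y0 -> 0 < X * X0 -> 0 < Y * Y0 -> 0 < X * Y.
Proof.
move=> /prod_pos h1 /prod_pos h2 /prod_pos h3.
case/orP: h1 => /andP [a b]; case/orP: h2 => /andP [c d]; case/orP: h3 => /andP [e f];
  nra.
Qed.
End Helpers.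

Section NI.
Variable n : nat.
Implicit Types (u v : 'rV[rat]_n) (W : 'M[int]_n) (p : rcpair n) (Phi S : seq (rcpair n)).
Definition niOn Phi u := forall b, b \in Phi -> pairQ u b.2 \isn't a Num.int.

Lemma ni_mul Phi S W u : (forall p, p \in S -> closedR Phi p) -> inW S W ->
  niOn Phi u -> niOn Phi (u *m toQM W).
Proof.
move=> hS hW hu b hb; rewrite pairQ_mul.
have [d hd [e1 _]] := L_co hS hW hb; rewrite -e1; exact: hu.
Qed.

Lemma ni_add Phi (l : 'rV[int]_n) u : niOn Phi u -> niOn Phi (toQ l + u).
Proof. move=> hu b hb; rewrite pairQD pairQ_toQ; apply: ni_addl; exact: hu. Qed.

Lemma ni_reflpt Phi p (m : int) u : closedR Phi p -> niOn Phi u -> niOn Phi (reflpt p m u).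
Proof.
move=> [h2 hcl] hu b hb; rewrite pair_reflpt addrC -mulrNz; apply: ni_addl.
exact: (hu _ (hcl _ hb)).
Qed.

Lemma niOn_sub Phi S u : {subset S <= Phi} -> niOn Phi u -> niOn S u.
Proof. by move=> hs hu b hb; apply: hu; apply: hs. Qed.
End NI.

Section Levi.
Variable n : nat.
Variable R : rootDatum n.
Variables h mu : 'rV[int]_n.
Hypothesis hreg : forall p, p \in rd_roots R -> pairZ p.1 h != 0.
Local Notation Phi := (rd_roots R).
Local Notation PhiM := (leviRoots R mu).
Local Notation y0 := (alcPt R h).

Lemma levi_sub : {subset PhiM <= Phi}.
Proof. by move=> b; rewrite mem_filter => /andP []. Qed.

Lemma levi_uniq : uniq PhiM.
Proof. apply: filter_uniq; exact: rd_uniqP. Qed.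

Lemma levi_closedG p : p \in PhiM -> closedR Phi p.
Proof. by move=> hp; apply: rd_closed; apply: levi_sub. Qed.

Lemma levi_closed p : p \in PhiM -> closedR PhiM p.
Proof.
move=> hp; have [h2 hcl] := levi_closedG hp; split => // c.
move: hp; rewrite !mem_filter => /andP [hp1 hp2] /andP [hc1 hc2].
rewrite hcl // andbT /= /reflV pairZD pairZN pairZZ (eqP hp1) (eqP hc1); apply/eqP; ring.
Qed.

Lemma levi_neg b : b \in PhiM -> (- b.1, - b.2) \in PhiM.
Proof.
rewrite !mem_filter => /andP [h1 h2]; rewrite rd_neg // andbT /= pairZN (eqP h1) oppr0 //.
Qed.

Lemma leviPos_eq : leviPos R h mu = [seq p <- PhiM | 0 < pairZ p.1 h].
Proof. by rewrite /leviPos /leviRoots -filter_predI; apply: eq_filter => p /=; rewrite andbC. Qed.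

Lemma y0_ni : niOn Phi y0.
Proof. by move=> b hb; case: (y0_prop hreg hb). Qed.

Lemma y0_fl0 b : b \in Phi -> 0 < pairZ b.1 h -> Num.floor (pairQ y0 b.2) = 0.
Proof. by move=> hb hp; case: (y0_prop hreg hb) => _ ->; rewrite hp. Qed.

Lemma lenG_conv x : niOn Phi (act x y0) -> Sig Phi y0 (act x y0) = (2 * lenG R h x)%N.
Proof.
move=> hx; rewrite (conv (h := h) (rd_uniqP R) (@rd_neg _ R)) //.
- by move=> b hb; apply: (y0_ni hb).
- by move=> b hb hp; apply: y0_fl0.
Qed.

Lemma lenM_conv x : niOn PhiM (act x y0) -> Sig PhiM y0 (act x y0) = (2 * lenM R h mu x)%N.
Proof.
move=> hx; rewrite (conv (h := h) levi_uniq levi_neg) //.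
- by rewrite /lenM /lenP leviPos_eq.
- by move=> b hb; apply: hreg; apply: levi_sub.
- exact: niOn_sub levi_sub y0_ni.
- by move=> b hb hp; apply: y0_fl0 => //; apply: levi_sub.
Qed.
End Levi.

Section WM.
Variable n : nat.
Variable R : rootDatum n.
Variables h mu : 'rV[int]_n.
Hypothesis hreg : forall p, p \in rd_roots R -> pairZ p.1 h != 0.
Variable w : 'M[int]_n.
Hypothesis w_in : inWM R h mu w.
Local Notation Phi := (rd_roots R).
Local Notation PhiM := (leviRoots R mu).
Local Notation y0 := (alcPt R h).

Lemma hW : inW Phi w.
Proof. by case: w_in. Qed.
Lemma hS : forall p, p \in Phi -> closedR Phi p.
Proof. exact: rd_closed. Qed.
Lemma hS2 : forall p, p \in Phi -> pairZ p.1 p.2 = 2.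
Proof. by move=> p hp; case: (hS hp). Qed.
Lemma wunit : w \in unitmx.
Proof. exact: inW_unit hS2 hW. Qed.

Lemma Lw b : b \in Phi -> exists2 d, d \in Phi & d.2 = b.2 *m w^T /\ d.1 = b.1 *m invmx w.
Proof.
move=> hb; have [d hd [e1 e2]] := L_co hS hW hb.
by exists d => //; split => //; rewrite -e2 -mulmxA mulmxV ?mulmx1 //; exact: wunit.
Qed.

Lemma leviPos_sub a : a \in leviPos R h mu -> [/\ a \in Phi, a \in PhiM & 0 < pairZ a.1 h].
Proof.
rewrite mem_filter => /andP [/andP [h1 h2] h3]; split => //.
by rewrite mem_filter h1.
Qed.

Lemma simple_pos a : a \in leviSimple R h mu -> 0 < pairZ (a.1 *m invmx w) h.
Proof.
move=> ha; have haP : a \in leviPos R h mu by move: ha; rewrite mem_filter => /andP [].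
have [haG haM hah] := leviPos_sub haP.
rewrite ltNge; apply/negP => hle.
have [d hd [e1 e2]] := Lw haG.
have dneg : pairZ d.1 h < 0 by rewrite lt_neqAle hreg // e2.
have hy0d : pairQ y0 d.2 < 0.
  apply: fl_neg; case: (y0_prop hreg hd) => _ ->; by rewrite ltNge (ltW dneg).
set v := y0 *m toQM w.
have hva : pairQ v a.2 < 0 by rewrite /v pairQ_mul -e1.
set u := reflpt a 0 v.
have niv : niOn Phi v by apply: (ni_mul hS hW); exact: y0_ni.
have niu : niOn Phi u by apply: ni_reflpt; [exact: hS | exact: niv].
have [_ ea2] := refl_self (hS2 haG).
have hc := core (rd_uniqP R) (m := 0) (p0 := y0) (u := u) haG (hS haG) (y0_ni hreg haG) (niu _ haG).
have y0a : 0 < pairQ y0 a.2 by apply: fl_pos; [exact: y0_ni | exact: y0_fl0].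
have : (Sig Phi y0 u < Sig Phi y0 (reflpt a 0 u))%N.
  apply: hc; rewrite !addr0 /u pair_reflpt ea2 pairQ_rN mul0r subr0.
  apply: mulr_gt0 => //; by rewrite oppr_gt0.
rewrite reflpt_inv ?(hS2 haG) //.
have eu : u = act (acomp (ofW (reflM a)) (ofW w)) y0.
  by rewrite act_comp !act_ofW /u /reflpt scale0r subr0.
have ev : v = act (ofW w) y0 by rewrite act_ofW.
rewrite {1}eu ev lenG_conv // -?ev; last by rewrite -eu.
rewrite ev lenG_conv //; last by rewrite -ev.
have := (w_in.2 _ ha); lia.
Qed.
Lemma levipos_pos a : a \in leviPos R h mu -> 0 < pairZ (a.1 *m invmx w) h.
Proof.
move=> ha; have [_ _ hah] := leviPos_sub ha.
move: {2}`|pairZ a.1 h|%N (leqnn `|pairZ a.1 h|%N) => k hk.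
elim: k a ha hah hk => [|k IH] a ha hah hk; first by lia.
have [hs|hns] := boolP (a \in leviSimple R h mu); first exact: simple_pos.
move: hns; rewrite mem_filter ha andbT negbK => /hasP [q hq /hasP [q' hq' /eqP eq]].
have [_ _ hqh] := leviPos_sub hq; have [_ _ hq'h] := leviPos_sub hq'.
have e : pairZ a.1 h = pairZ q.1 h + pairZ q'.1 h by rewrite -eq pairZD.
rewrite -eq mulmxDl pairZD.
have key : (`|pairZ q.1 h| <= k)%N /\ (`|pairZ q'.1 h| <= k)%N.
  move: e hk hqh hq'h; set A := pairZ a.1 h; set B := pairZ q.1 h; set C := pairZ q'.1 h; lia.
by apply: addr_gt0; [apply: (IH q) | apply: (IH q')] => //; case: key.
Qed.

Lemma sameFl_W b : b \in PhiM -> sameFl (pairQ (y0 *m toQM w) b.2) (pairQ y0 b.2).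
Proof.
move=> hbM; have hb := levi_sub hbM.
have [d hd [e1 e2]] := Lw hb.
rewrite pairQ_mul -e1.
have [nid fd] := y0_prop hreg hd; have [nib fb] := y0_prop hreg hb.
split => //; rewrite fd fb.
have [hp|hnp] := boolP (0 < pairZ b.1 h).
  have hbP : b \in leviPos R h mu by rewrite mem_filter hp andbT; move: hbM; rewrite mem_filter => /andP [-> _].
  by rewrite e2 (levipos_pos hbP).
have hn : pairZ b.1 h < 0 by rewrite lt_neqAle hreg //= leNgt.
have hbP : rneg b \in leviPos R h mu.
  have := levi_neg hbM; rewrite !mem_filter => /andP [-> ->] /=.
  by rewrite pairZN oppr_gt0 hn.
have := levipos_pos hbP; rewrite /= mulNmx pairZN oppr_gt0 -e2 => hdn.
by rewrite (lt_gtF hdn).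
Qed.
End WM.

Lemma mat_conj n (a d : rcpair n) (w : 'M[int]_n) : w \in unitmx ->
  d.2 = a.2 *m w^T -> d.1 = a.1 *m invmx w ->
  reflM a *m invmx w = invmx w *m reflM d.
Proof.
move=> hu e2 e1; rewrite /reflM mulmxBl mul1mx mulmxBr mulmx1; congr (_ - _).
rewrite e2 e1 trmx_mul trmxK !mulmxA mulVmx // mul1mx //.
Qed.

Local Close Scope ring_scope.

Theorem mainTheorem13 (n : nat) (R : rootDatum n) (h mu : 'rV[int]_n)
  (h_reg : forall p, p \in rd_roots R -> pairZ p.1 h != 0%R)
  (z r : affT n)
  (z_in : inW (leviRoots R mu) z.2)
  (r_refl : affRefl (leviRoots R mu) r)
  (hlt : (lenM R h mu z < lenM R h mu (acomp r z))%N)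
  (w : 'M[int]_n) (w_in : inWM R h mu w) :
  (lenG R h (acomp (ainv (ofW w)) (acomp z (ofW w)))
     < lenG R h (acomp (ainv (ofW w)) (acomp (acomp r z) (ofW w))))%N.
Proof.
Local Open Scope ring_scope.
have [a haM [m er]] := r_refl; subst r.
have haG := levi_sub haM.
have hclG := rd_closed haG.
have h2 : pairZ a.1 a.2 = 2 by case: hclG.
have hclM := levi_closed haM.
have hSM : forall p, p \in leviRoots R mu -> closedR (rd_roots R) p.
  by move=> p hp; apply: (levi_closedG hp).
have hSMM : forall p, p \in leviRoots R mu -> closedR (leviRoots R mu) p.
  by move=> p hp; apply: (levi_closed hp).
have hSG : forall p, p \in rd_roots R -> closedR (rd_roots R) p by move=> p hp; apply: rd_closed.
have y0ni : niOn (rd_roots R) (alcPt R h) by move=> b hb; apply: y0_ni.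
set y0 := alcPt R h.
have [_ ea2] := refl_self h2.
set u1 := act z y0.
have niu1 : niOn (rd_roots R) u1.
  by rewrite /u1 /act; apply: ni_add; apply: (ni_mul hSM z_in y0ni).
have s3 : 0 < (pairQ y0 a.2 + m%:~R) * (pairQ u1 a.2 + m%:~R).
  rewrite ltNge; apply/negP => hle.
  have nz : forall x : rat, x \isn't a Num.int -> x + m%:~R != 0.
    move=> x hx; apply/negP => /eqP ex; move: hx.
    have -> : x = (- m)%:~R by rewrite mulrNz; apply/eqP; rewrite -addr_eq0 ex.
    by rewrite intr_int.
  have hneg : (pairQ y0 a.2 + m%:~R) * (pairQ u1 a.2 + m%:~R) < 0.
    by rewrite lt_neqAle hle andbT mulf_neq0 // nz //; [apply: y0ni | apply: niu1].
  set u1' := reflpt a m u1.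
  have e' : act (acomp (- (m *: a.1), reflM a) z) y0 = u1' by rewrite act_comp act_refl.
  have niu1' : niOn (rd_roots R) u1' by apply: ni_reflpt.
  have hc : (Sig (leviRoots R mu) y0 u1' < Sig (leviRoots R mu) y0 (reflpt a m u1'))%N.
    apply: (core (levi_uniq R mu)) => //; [exact: y0ni | exact: niu1' |].
    rewrite /u1' pair_reflpt ea2 pairQ_rN h2.
    have -> : ((m * 2)%:~R : rat) = m%:~R + m%:~R by rewrite intrM; ring.
    nra.
  move: hc; rewrite reflpt_inv // -e'.
  rewrite lenM_conv //; last by apply: (niOn_sub (@levi_sub _ R mu)); rewrite e'.
  rewrite /u1 lenM_conv //; last by apply: (niOn_sub (@levi_sub _ R mu)).
  move: hlt; lia.
have hWin : inW (rd_roots R) w by case: w_in.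
have wu : w \in unitmx := wunit w_in.
have hWi : inW (rd_roots R) (invmx w).
  by apply: inW_inv hWin => p hp; case: (hSG _ hp).
set v := y0 *m toQM w.
set q := act z v.
set u := q *m toQM (invmx w).
have ex1 : act (acomp (ainv (ofW w)) (acomp z (ofW w))) y0 = u.
  by rewrite !act_comp act_ofW act_ainv.
have [d hd [ed2 ed1]] := Lw w_in haG.
have ex2 : act (acomp (ainv (ofW w)) (acomp (acomp (- (m *: a.1), reflM a) z) (ofW w))) y0
           = reflpt d m u.
  rewrite !act_comp act_ofW act_ainv act_refl -/v -/q /u /reflpt mulmxBl.
  rewrite -[q *m toQM (reflM a) *m _]mulmxA -toQM_mul (mat_conj wu ed2 ed1) toQM_mul mulmxA.
  by rewrite -scalemxAl -toQ_mul -ed1.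
have niv : niOn (rd_roots R) v by apply: (ni_mul hSG hWin).
have niq : niOn (rd_roots R) q by rewrite /q /act; apply: ni_add; apply: (ni_mul hSM z_in).
have niu : niOn (rd_roots R) u by apply: (ni_mul hSG hWi).
have niu' : niOn (rd_roots R) (reflpt d m u) by apply: ni_reflpt => //; apply: hSG.
have py0d : pairQ y0 d.2 = pairQ v a.2 by rewrite ed2 /v pairQ_mul.
have pud : pairQ u d.2 = pairQ q a.2.
  by rewrite /u pairQ_mul ed2 -mulmxA -trmx_mul mulVmx // trmx1 mulmx1.
have [e heM [ee2 _]] := L_co hSMM z_in haM.
have pq : pairQ q a.2 = (pairZ z.1 a.2)%:~R + pairQ v e.2.
  by rewrite /q /act pairQD pairQ_toQ pairQ_mul ee2.
have pu1 : pairQ u1 a.2 = (pairZ z.1 a.2)%:~R + pairQ y0 e.2.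
  by rewrite /u1 /act pairQD pairQ_toQ pairQ_mul ee2.
have sA : 0 < (pairQ v a.2 + m%:~R) * (pairQ y0 a.2 + m%:~R).
  by apply: sameFl_sign; apply: (sameFl_W h_reg w_in haM).
have sE : 0 < (pairQ v e.2 + (pairZ z.1 a.2 + m)%:~R) * (pairQ y0 e.2 + (pairZ z.1 a.2 + m)%:~R).
  by apply: sameFl_sign; apply: (sameFl_W h_reg w_in heM).
have hc : (Sig (rd_roots R) y0 u < Sig (rd_roots R) y0 (reflpt d m u))%N.
  apply: (core (rd_uniqP R)) => //; [exact: hSG | exact: y0ni | exact: niu |].
  rewrite py0d pud; apply: (sign3 s3 sA).
  by move: sE; rewrite intrD pq pu1 !addrA ![_ + pairQ _ e.2]addrC.
move: hc; rewrite -ex2 -ex1 !lenG_conv //; [lia | by rewrite ex2 | by rewrite ex1].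
Qed.
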